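(* For $m\ge1$, the space $(\mathbb Z^m,d_a)$ admits a linear $1$-perfect code if and only if there exists an Abelian planar difference set of order $m$.
   Context: $d_a(\mathbf x,\mathbf y)=\max\{\sum_{i:x_i>y_i}(x_i-y_i),\sum_{i:x_i<y_i}(y_i-x_i)\}$ on $\mathbb Z^m$. A linear code is a sublattice (subgroup) of $\mathbb Z^m$. A code $\mathcal C$ is $r$-perfect if the balls $\{\mathbf y:d_a(\mathbf y,\mathbf x)\le r\}$, $\mathbf x\in\mathcal C$, are pairwise disjoint and cover $\mathbb Z^m$. An Abelian planar difference set of order $m$ is a subset $D$ of cardinality $m+1$ of an Abelian group $G$ of order $m^2+m+1$ such that every nonzero element of $G$ can be written as $a-b$ with $a,b\in D$ in exactly one way. *)

(* Defs.v *)
From HB Require Import structures.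
From mathcomp Require Import all_boot all_order all_algebra.
Set Implicit Arguments. Unset Strict Implicit. Unset Printing Implicit Defensive.
Import Order.TTheory GRing.Theory Num.Theory.
Local Open Scope ring_scope.

Definition dist_a (m : nat) (x y : 'rV[int]_m) : int :=
  Num.max (\sum_(i < m | y 0 i < x 0 i) (x 0 i - y 0 i))
          (\sum_(i < m | x 0 i < y 0 i) (y 0 i - x 0 i)).

Definition linear_code (m : nat) (C : pred 'rV[int]_m) : Prop :=
  0 \in C /\ (forall x y, x \in C -> y \in C -> x - y \in C).

Definition perfect_code (m r : nat) (C : pred 'rV[int]_m) : Prop :=
  (forall x x' y, x \in C -> x' \in C -> x != x' ->
      ~ (dist_a y x <= r%:Z /\ dist_a y x' <= r%:Z)) /\
  (forall y, exists2 x, x \in C & dist_a y x <= r%:Z).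

Definition planar_difference_set (G : finZmodType) (m : nat) (D : {set G}) : Prop :=
  #|G| = (m ^ 2 + m + 1)%N /\ #|D| = m.+1 /\
  (forall g : G, g != 0 ->
     #|[set p : G * G | [&& p.1 \in D, p.2 \in D & p.1 - p.2 == g]]| = 1%N).

(* Main.v *)
Require Import Defs.
From HB Require Import structures.
From mathcomp Require Import all_boot all_order all_algebra.
From mathcomp Require Import zify.
Import Order.TTheory GRing.Theory Num.Theory.
Local Open Scope ring_scope.
Set Implicit Arguments. Unset Strict Implicit.
Section Ball.
Context {m : nat}.
Definition ev (a : option 'I_m) : 'rV[int]_m := \row_j ((a == Some j)%:R).
Definition vec (a b : option 'I_m) : 'rV[int]_m := ev a - ev b.

Lemma vecE a b k : vec a b 0 k = (a == Some k)%:R - (b == Some k)%:R.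
Proof. by rewrite !mxE. Qed.

Lemma dist_sub (y x : 'rV[int]_m) : dist_a y x = dist_a (y - x) 0.
Proof.
rewrite /dist_a; congr Num.max.
  by apply: eq_big => i; rewrite !mxE ?subr_gt0 // subr0.
by apply: eq_big => i; rewrite !mxE ?subr_lt0 // sub0r opprB.
Qed.

Lemma dist_opp (z : 'rV[int]_m) : dist_a (- z) 0 = dist_a z 0.
Proof.
rewrite /dist_a maxC; congr Num.max.
  by apply: eq_big => i; rewrite !mxE ?oppr_lt0 ?oppr_gt0 // ?subr0 ?sub0r ?opprK.
by apply: eq_big => i; rewrite !mxE ?oppr_lt0 ?oppr_gt0 // ?subr0 ?sub0r ?opprK.
Qed.

Lemma sum_ev (a : option 'I_m) : \sum_i ((a == Some i)%:R : int) <= 1.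
Proof.
case: a => [k|]; last by rewrite big1.
rewrite (bigD1 k) //= eqxx big1 ?addr0 // => i ik.
by case: eqP => // -[ki]; rewrite ki eqxx in ik.
Qed.

Lemma ball_vec a b : dist_a (vec a b) 0 <= 1.
Proof.
rewrite /dist_a ge_max; apply/andP; split.
  apply: le_trans (sum_ev a); rewrite big_mkcond /=; apply: ler_sum => i _.
  by rewrite !mxE; case: eqP; case: eqP.
apply: le_trans (sum_ev b); rewrite big_mkcond /=; apply: ler_sum => i _.
by rewrite !mxE; case: eqP; case: eqP.
Qed.

Lemma sign1 (z : 'rV[int]_m) : dist_a z 0 <= 1 -> forall i, 0 < z 0 i ->
  z 0 i = 1 /\ forall j, 0 < z 0 j -> j = i.
Proof.
rewrite /dist_a ge_max => /andP[hp _] i zi.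
have e : \sum_(k < m | 0 < z 0 k) (z 0 k - (0 : 'rV[int]_m) 0 k)
        = \sum_(k < m | 0 < z 0 k) z 0 k.
  by apply: eq_bigr => k _; rewrite mxE subr0.
rewrite (eq_bigl (fun k => 0 < z 0 k)) in hp e *; last by move=> k; rewrite mxE.
rewrite e in hp.
have ge0 : forall P, 0 <= \sum_(k < m | (0 < z 0 k) && P k) z 0 k.
  by move=> P; apply: sumr_ge0 => k /andP[/ltW].
split.
  have : z 0 i <= 1.
    apply: le_trans hp; rewrite (bigD1 i) //= lerDl.
    by apply: sumr_ge0 => k /andP[/ltW].
  by move: zi; lia.
move=> j zj; apply/eqP; apply: contraT => ji.
have : z 0 i + z 0 j <= 1.
  apply: le_trans hp; rewrite (bigD1 i) //= (bigD1 j) /=; last by rewrite zj.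
  by rewrite addrA lerDl; apply: sumr_ge0 => k /andP[/andP[/ltW]].
by move: zi zj; lia.
Qed.

Lemma sign1N (z : 'rV[int]_m) : dist_a z 0 <= 1 -> forall i, z 0 i < 0 ->
  z 0 i = -1 /\ forall j, z 0 j < 0 -> j = i.
Proof.
rewrite -dist_opp => h i zi.
have [|h1 h2] := @sign1 _ h i; first by rewrite mxE oppr_gt0.
split; first by move: h1; rewrite mxE => /eqP; rewrite eqr_oppLR => /eqP.
by move=> j zj; apply: h2; rewrite mxE oppr_gt0.
Qed.

Definition enc (z : 'rV[int]_m) : option 'I_m * option 'I_m :=
  ([pick i | 0 < z 0 i], [pick i | z 0 i < 0]).

Definition inS (p : option 'I_m * option 'I_m) := (p.1 != p.2) || (p.1 == None).

Lemma encS z : inS (enc z).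
Proof.
rewrite /inS /enc /=; case: pickP => [i zi|]; last by rewrite orbT.
case: pickP => [j zj|] //=; apply/orP; left; apply/eqP => -[ij].
by move: zi zj; rewrite ij; lia.
Qed.

Lemma pickpos (z : 'rV[int]_m) k : dist_a z 0 <= 1 ->
  ([pick i | 0 < z 0 i] == Some k) = (0 < z 0 k).
Proof.
move=> hz; case: pickP => [i zi|h]; last by rewrite h.
apply/eqP/idP => [[<-]//|zk].
by rewrite (proj2 (sign1 hz zk) i zi).
Qed.

Lemma pickneg (z : 'rV[int]_m) k : dist_a z 0 <= 1 ->
  ([pick i | z 0 i < 0] == Some k) = (z 0 k < 0).
Proof.
move=> hz; case: pickP => [i zi|h]; last by rewrite h.
apply/eqP/idP => [[<-]//|zk].
by rewrite (proj2 (sign1N hz zk) i zi).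
Qed.

Lemma ball_enc z : dist_a z 0 <= 1 -> vec (enc z).1 (enc z).2 = z.
Proof.
move=> hz; apply/rowP => k; rewrite vecE /enc /= pickpos // pickneg //.
case: (ltrgtP (z 0 k) 0) => [zn|zp|->] //.
  by have [-> _] := sign1N hz zn.
by have [-> _] := sign1 hz zp.
Qed.

Lemma eqSome (T : eqType) (i k : T) : (Some i == Some k) = (i == k). Proof. by []. Qed.
Lemma enc_vec (a b : option 'I_m) : inS (a, b) -> enc (vec a b) = (a, b).
Proof.
move=> hS; have hb := ball_vec a b.
have oe : forall (x y : option 'I_m), (forall k, (x == Some k) = (y == Some k)) -> x = y.
  move=> [x|] [y|] e //.
  - by have := e y; rewrite eqxx => /eqP.
  - by have := e x; rewrite eqxx.
  - by have := e y; rewrite eqxx.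
rewrite /enc; congr pair; apply: oe => k; rewrite ?pickpos ?pickneg // vecE;
clear hb; move: hS; rewrite /inS /=;
case: a => [i|]; case: b => [j|] //=; rewrite ?eqSome //=;
try (case: (i =P k) => [->|]); try (case: (j =P k) => [->|]); rewrite ?eqxx //=; try lia; move=> _; by case: (_ == k).
Qed.
End Ball.
Definition dfun (G : finType) (A : {set G}) m (h : #|A| = m) (d0 : G) (a : option 'I_m) : G :=
  if a is Some i then @enum_val _ (mem A) (cast_ord (esym h) i) else d0.

Lemma bwd m (G : finZmodType) (D : {set G}) : planar_difference_set m D ->
  exists C : pred 'rV[int]_m, linear_code C /\ perfect_code 1 C.
Proof.
case=> _ [hD hdiff].
have [d0 d0D] : exists d0, d0 \in D by apply/card_gt0P; rewrite hD.
have hD' : #|D :\ d0| = m by move: hD; rewrite (cardsD1 d0) d0D add1n => -[].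
pose d := dfun hD' d0.
have dD a : d a \in D.
  case: a => [i|] //=; rewrite /dfun; have := enum_valP (cast_ord (esym hD') i).
  by rewrite in_setD1 => /andP[].
have dinj : injective d.
  have ne i : d (Some i) != d0.
    rewrite /d /dfun; by have := enum_valP (cast_ord (esym hD') i); rewrite in_setD1 => /andP[].
  move=> [i|] [j|] e; rewrite /d /dfun in e.
  - by congr Some; apply: (cast_ord_inj (eq_n := esym hD')); apply: enum_val_inj.
  - by move: (ne i); rewrite /d /dfun e eqxx.
  - by move: (ne j); rewrite /d /dfun -e eqxx.
  - by [].
have dsurj p : p \in D -> exists a, d a = p.
  move=> pD; case: (eqVneq p d0) => [->|pd0]; first by exists None.
  have pD' : p \in D :\ d0 by rewrite in_setD1 pd0.
  exists (Some (cast_ord hD' (enum_rank_in pD' p))); rewrite /d /dfun.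
  by rewrite cast_ordK enum_rankK_in.
pose phi (y : 'rV[int]_m) : G := \sum_i (d (Some i) - d0) *~ y 0 i.
have phiB x y : phi (x - y) = phi x - phi y.
  by rewrite /phi -sumrB; apply: eq_bigr => i _; rewrite !mxE mulrzBr.
have phi_ev a : phi (ev a) = d a - d0.
  rewrite /phi; case: a => [k|] /=.
    rewrite (bigD1 k) //= mxE eqxx mulr1z big1 ?addr0 // => i ik.
    by rewrite mxE eqSome eq_sym (negbTE ik) mulr0z.
  by rewrite subrr big1 // => i _; rewrite mxE mulr0z.
have phi_vec a b : phi (vec a b) = d a - d b.
  by rewrite /vec phiB !phi_ev opprB addrA subrK.
exists [pred y | phi y == 0]; split.
  split; first by rewrite inE -(subrr 0) phiB subrr.
  by move=> x y; rewrite !inE phiB => /eqP-> /eqP->; rewrite subrr.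
split.
  move=> x x' y; rewrite !inE => /eqP hx /eqP hx' xx' [h1 h2].
  move: h1 h2; rewrite (dist_sub y x) (dist_sub y x') => /ball_enc e1 /ball_enc e2.
  move: (enc (y - x)) (enc (y - x')) e1 e2 => [a b] [a' b'] /= e1 e2.
  have ev : d a - d b = d a' - d b'.
    by rewrite -!phi_vec e1 e2 !phiB hx hx'.
  suff : vec a b = vec a' b'.
    rewrite e1 e2 => /eqP; rewrite (can_eq (addKr y)) => /eqP/oppr_inj xe.
    by rewrite xe eqxx in xx'.
  case: (eqVneq (d a - d b) 0) => [g0|gn0].
    move: (g0); rewrite ev => /eqP; rewrite subr_eq0 => /eqP/dinj ->.
    by move: g0 => /eqP; rewrite subr_eq0 => /eqP/dinj ->; rewrite /vec !subrr.
  have /eqP/cards1P[p0 hp0] := hdiff _ gn0.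
  have m1 : (d a, d b) \in [set p : G * G | [&& p.1 \in D, p.2 \in D & p.1 - p.2 == d a - d b]].
    by rewrite inE /= !dD eqxx.
  have m2 : (d a', d b') \in [set p : G * G | [&& p.1 \in D, p.2 \in D & p.1 - p.2 == d a - d b]].
    by rewrite inE /= !dD ev eqxx.
  rewrite hp0 !inE in m1 m2.
  move/eqP: m1 => m1; move/eqP: m2; rewrite -m1 => -[/dinj-> /dinj->].
  by [].
move=> y.
have [a [b hab]] : exists a b, d a - d b = phi y.
  case: (eqVneq (phi y) 0) => [->|gn0]; first by exists None, None; rewrite subrr.
  have /card_gt0P[[p1 p2]] : (0 < #|[set p : G * G | [&& p.1 \in D, p.2 \in D & (p.1 - p.2 == phi y)%R]]|)%N.
    by rewrite hdiff.
  rewrite inE /= => /and3P[/dsurj[a <-] /dsurj[b <-] /eqP e].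
  by exists a, b.
exists (y - vec a b); first by rewrite inE phiB phi_vec hab subrr.
by rewrite dist_sub subKr ball_vec.
Qed.
Definition isPC m (C : pred 'rV[int]_m) := linear_code C /\ perfect_code 1 C.
Definition GQ m (C : pred 'rV[int]_m) (H : isPC C) :=
  {p : option 'I_m * option 'I_m | inS p}.
HB.instance Definition _ m C H := Finite.on (@GQ m C H).

Lemma ball0 m : dist_a (0 : 'rV[int]_m) 0 <= 1.
Proof. by have := ball_vec (@None 'I_m) None; rewrite /vec subrr. Qed.

Section Q.
Variables (m : nat) (C : pred 'rV[int]_m) (H : isPC C).

Lemma Cadd x y : x \in C -> y \in C -> x + y \in C.
Proof.
case: H => -[C0 CB] _ hx hy.
by have := CB _ _ hx (CB _ _ C0 hy); rewrite sub0r opprK.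
Qed.

Lemma COpp x : x \in C -> - x \in C.
Proof. by case: H => -[C0 CB] _ hx; have := CB _ _ C0 hx; rewrite sub0r. Qed.

Lemma cw_ex y : exists x, (x \in C) && (dist_a y x <= 1).
Proof. by case: H => _ [_ cov]; have [x xC hx] := cov y; exists x; rewrite xC hx. Qed.

Definition cw y := xchoose (cw_ex y).
Definition red y := y - cw y.

Lemma cwC y : cw y \in C.
Proof. by have /andP[] := xchooseP (cw_ex y). Qed.

Lemma red_ball y : dist_a (red y) 0 <= 1.
Proof. by have /andP[_] := xchooseP (cw_ex y); rewrite dist_sub. Qed.

Lemma cw_uniq y x : x \in C -> dist_a (y - x) 0 <= 1 -> cw y = x.
Proof.
move=> xC hx; case: (eqVneq (cw y) x) => // ne; exfalso.
have [_ [dis _]] := H; have := dis _ _ y (cwC y) xC ne; apply; split.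
  by have /andP[] := xchooseP (cw_ex y).
by rewrite dist_sub.
Qed.

Lemma redE y r : dist_a r 0 <= 1 -> y - r \in C -> red y = r.
Proof. by move=> hr hC; rewrite /red (cw_uniq hC) ?subKr. Qed.

Lemma red_eq y y' : y - y' \in C -> red y = red y'.
Proof.
move=> h; apply: redE; first exact: red_ball.
have -> : y - red y' = (y - y') + cw y'.
  by rewrite /red opprB addrCA addrC.
by apply: Cadd => //; apply: cwC.
Qed.

Lemma redDl a b : red (red a + b) = red (a + b).
Proof.
apply: red_eq; have -> : red a + b - (a + b) = - cw a.
  by rewrite /red [a - _ + b]addrAC [LHS]addrC addKr.
by apply: COpp; apply: cwC.
Qed.

Lemma redDr a b : red (a + red b) = red (a + b).
Proof. by rewrite addrC redDl addrC. Qed.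

Lemma red_id r : dist_a r 0 <= 1 -> red r = r.
Proof. by move=> hr; apply: redE => //; rewrite subrr; case: H => -[]. Qed.

Definition vq (p : GQ H) := vec (val p).1 (val p).2.
Definition eG z : GQ H := exist _ (enc z) (encS z).

Lemma vq_eG z : dist_a z 0 <= 1 -> vq (eG z) = z.
Proof. exact: ball_enc. Qed.

Lemma eG_vq p : eG (vq p) = p.
Proof. by apply: val_inj; case: p => -[a b] hp /=; rewrite /vq /= enc_vec. Qed.

Lemma vq_inj : injective vq.
Proof. by move=> p q e; rewrite -(eG_vq p) e eG_vq. Qed.

Lemma vq_ball p : dist_a (vq p) 0 <= 1.
Proof. exact: ball_vec. Qed.

Definition zeroQ := eG 0.
Definition addQ p q := eG (red (vq p + vq q)).
Definition oppQ p := eG (red (- vq p)).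

Lemma vq_add p q : vq (addQ p q) = red (vq p + vq q).
Proof. by rewrite vq_eG // red_ball. Qed.
Lemma vq_opp p : vq (oppQ p) = red (- vq p).
Proof. by rewrite vq_eG // red_ball. Qed.
Lemma vq_zero : vq zeroQ = 0.
Proof. by rewrite vq_eG // ball0. Qed.

Lemma addQA : associative addQ.
Proof. by move=> p q r; apply: vq_inj; rewrite !vq_add redDl redDr addrA. Qed.
Lemma addQC : commutative addQ.
Proof. by move=> p q; rewrite /addQ addrC. Qed.
Lemma add0Q : left_id zeroQ addQ.
Proof. by move=> p; apply: vq_inj; rewrite vq_add vq_zero add0r red_id ?vq_ball. Qed.
Lemma addNQ : left_inverse zeroQ oppQ addQ.
Proof. by move=> p; apply: vq_inj; rewrite vq_add vq_opp redDl addNr vq_zero red_id ?ball0. Qed.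
End Q.

HB.instance Definition _ m C H := GRing.isZmodule.Build (@GQ m C H)
  (@addQA m C H) (@addQC m C H) (@add0Q m C H) (@addNQ m C H).

Lemma vq_sub m C H (p q : @GQ m C H) : vq (p - q) = red H (vq p - vq q).
Proof. by rewrite [p - q]/(addQ p (oppQ q)) vq_add vq_opp redDr. Qed.
Lemma card_GQ m C (H : @isPC m C) : #|{: GQ H}| = (m ^ 2 + m + 1)%N.
Proof.
have -> : #|{: GQ H}| = #|[pred p : option 'I_m * option 'I_m | inS p]| by exact: card_sig.
have hc := cardC [pred p : option 'I_m * option 'I_m | inS p].
rewrite card_prod card_option card_ord in hc.
have hm : #|[predC [pred p : option 'I_m * option 'I_m | inS p]]| = m.
  rewrite (@eq_card _ _ [set (Some i, Some i) | i : 'I_m]) ?card_imset ?card_ord //.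
    by move=> i j [].
  move=> [[i|] [j|]]; rewrite !inE /inS /=; apply/idP/imsetP => //=.
  - rewrite negb_or andbT negbK eqSome => /eqP ->; by exists j.
  - by case=> k _ [-> ->]; rewrite negb_or eqxx.
  - by case=> k _ [].
  - by case=> k _ [].
  - by case=> k _ [].
rewrite hm in hc; move: hc; move: #|_| => n; rewrite expnS expn1 => h; nia.
Qed.

Lemma mkS m (a : option 'I_m) : inS (a, None).
Proof. by case: a. Qed.

Lemma ev0 m : ev (@None 'I_m) = 0.
Proof. by apply/rowP => k; rewrite !mxE. Qed.

Lemma fwd m C (H : @isPC m C) :
  exists (G : finZmodType) (D : {set G}), planar_difference_set m D.
Proof.
pose mkD (a : option 'I_m) : GQ H := exist _ (a, None) (mkS a).
have vq_mkD a : vq (mkD a) = ev a by rewrite /vq /= /vec ev0 subr0.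
have vq0 : vq (0 : GQ H) = 0 by exact: vq_zero.
exists (GQ H), [set mkD a | a : option 'I_m].
split; first exact: card_GQ.
split.
  by rewrite card_imset ?card_option ?card_ord // => a b /(congr1 val) [].
move=> g gn0; apply/eqP/cards1P.
case: g gn0 => -[c e] hg gn0; exists (mkD c, mkD e).
apply/setP => -[p1 p2]; rewrite !inE /=; apply/idP/idP.
  case/and3P => /imsetP[a _ ->] /imsetP[b _ ->].
  move/eqP/(congr1 (@vq m C H)); rewrite vq_sub !vq_mkD (red_id H (ball_vec a b)).
  rewrite /vq /= => E.
  case: (boolP (inS (a, b))) => hab.
    by have := enc_vec hab; rewrite E enc_vec // => -[-> ->].
  exfalso; move: hab; rewrite /inS /= negb_or negbK => /andP[/eqP ab _].
  move: E; rewrite ab /vec subrr => /esym E0.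
  have := enc_vec hg; rewrite /vec E0.
  have -> : (0 : 'rV[int]_m) = vec None None by rewrite /vec subrr.
  rewrite enc_vec // => -[ec ee].
  move/eqP: gn0; apply; apply: vq_inj.
  by rewrite vq0 /vq /= -ec -ee /vec subrr.
move/eqP => -[-> ->]; rewrite !imset_f //=.
apply/eqP/vq_inj; rewrite vq_sub !vq_mkD (red_id H (ball_vec c e)).
by [].
Qed.

Unset Implicit Arguments.
Theorem mainTheorem9 (m : nat) (hm : (1 <= m)%N) :
  (exists C : pred 'rV[int]_m, linear_code C /\ perfect_code 1 C) <->
  (exists (G : finZmodType) (D : {set G}), planar_difference_set m D).
Proof.
split.
  by case=> C H; exact: (@fwd m C H).
by case=> G [D hD]; exact: bwd hD.
Qed.
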